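(* Let $m \equiv 1 \pmod 4$ with $m > 1$, $n = 3^m - 1$, $v = (3^{(m-1)/2}+1)/2$ and $\delta = (3^{(m-1)/2}+13)/2$. Then $\gcd(v,n) = 1$, and, setting $T_{(0,1,m)}(v) = \{ vi \bmod n : i \in T_{(0,1,m)}\}$, we have $\{n-(\delta-1), \ldots, n-2, n-1\} \subseteq T_{(0,1,m)}(v)$.
   Context: For an integer $0 \le j \le n-1$ with $3$-adic expansion $j = \sum_{t=0}^{m-1} j_t 3^t$, $j_t \in \{0,1,2\}$, let $w_3(j) = \sum_{t=0}^{m-1} j_t$. For distinct $i_1,i_2 \in \{0,1,2,3\}$, $T_{(i_1,i_2,m)} = \{1 \le j \le n-1 : w_3(j) \equiv i_1 \text{ or } i_2 \pmod 4\}$. For an integer $b$, $b \bmod n$ is the unique $b_0 \in \{0,\ldots,n-1\}$ with $b \equiv b_0 \pmod n$. *)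

(* Defs.v *)
From mathcomp Require Import all_boot.
Set Implicit Arguments. Unset Strict Implicit. Unset Printing Implicit Defensive.

Definition w3 (m j : nat) : nat := \sum_(t < m) ((j %/ 3 ^ t) %% 3).

Definition T (i1 i2 m : nat) : pred nat :=
  fun j => (1 <= j <= (3 ^ m - 1) - 1) &&
           ((w3 m j %% 4 == i1) || (w3 m j %% 4 == i2)).

(* Main.v *)
Require Import Defs.
From mathcomp Require Import all_boot.
From mathcomp Require Import zify.

Lemma w3S m j : w3 m.+1 j = j %% 3 + w3 m (j %/ 3).
Proof.
rewrite /w3 big_ord_recl /= expn0 divn1; congr (_ + _).
by apply: eq_bigr => i _; rewrite /bump /= add1n expnS divnMA.
Qed.

Lemma w30 j : w3 0 j = 0.
Proof. by rewrite /w3 big_ord0. Qed.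

Lemma w3_zero p : w3 p 0 = 0.
Proof. by elim: p => [|p IH]; rewrite ?w30 // w3S div0n mod0n IH. Qed.

Lemma w3A p q x y : y < 3 ^ p -> w3 (p + q) (x * 3 ^ p + y) = w3 p y + w3 q x.
Proof.
elim: p x y => [|p IH] x y Hy.
  have -> : y = 0 by move: Hy; rewrite expn0; lia.
  by rewrite add0n expn0 muln1 addn0 w30.
rewrite addSn !w3S expnS mulnCA.
set z := x * 3 ^ p.
have -> : (3 * z + y) %% 3 = y %% 3 by lia.
have -> : (3 * z + y) %/ 3 = z + y %/ 3 by lia.
rewrite IH; first by rewrite addnA.
move: Hy; rewrite expnS; lia.
Qed.

Lemma w3C p a b : a + b + 1 = 3 ^ p -> w3 p a + w3 p b = 2 * p.
Proof.
elim: p a b => [|p IH] a b H.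
  by rewrite !w30.
rewrite !w3S.
move: H; rewrite expnS => H.
have H1 : a %% 3 + b %% 3 = 2 by lia.
have H2 : a %/ 3 + b %/ 3 + 1 = 3 ^ p by lia.
have := IH _ _ H2; lia.
Qed.

Lemma w3_small p q y : y < 3 ^ p -> w3 (p + q) y = w3 p y.
Proof. by move=> Hy; have := @w3A p q 0 y Hy; rewrite mul0n add0n w3_zero addn0. Qed.

Lemma modn_eq a j Q n : a + j = Q * n -> 0 < j <= n -> a %% n = n - j.
Proof.
move=> H Hj; case: Q H => [|Q] H; first by lia.
have -> : a = Q * n + (n - j) by move: H; rewrite mulSn; lia.
by rewrite modnMDl modn_small //; lia.
Qed.
Lemma w3i h a b r : b < 3 ^ h -> r < 3 ->
  w3 (h.+1 + h) (a * 3 ^ h.+1 + (3 * b + r)) = r + w3 h b + w3 h a.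
Proof.
move=> Hb Hr; rewrite w3A; last by rewrite expnS; lia.
rewrite w3S.
have -> : (3 * b + r) %% 3 = r by lia.
by have -> : (3 * b + r) %/ 3 = b by lia.
Qed.

Lemma finish h X N v j i a b r Q :
  X = 3 ^ h -> 3 ^ (h.+1 + h) - 1 = N -> 3 ^ h.+1 = 3 * X ->
  i = a * (3 * X) + (3 * b + r) -> b < X -> r < 3 ->
  1 <= i <= N - 1 -> v * i + j = Q * N -> 0 < j <= N ->
  ((r + w3 h b + w3 h a) %% 4 == 0) || ((r + w3 h b + w3 h a) %% 4 == 1) ->
  T 0 1 (h.+1 + h) i /\ (v * i) %% N = N - j.
Proof.
move=> HX HN H3 Hi Hb Hr Hi1 Heq Hj Hw; split; last exact: modn_eq Heq Hj.
rewrite /T HN Hi1 /= Hi -H3 w3i //; by rewrite -HX.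
Qed.

Lemma finish' h X N v j i a b r Q :
  X = 3 ^ h -> 3 ^ (h.+1 + h) - 1 = N -> 3 ^ h.+1 = 3 * X ->
  i = a * (3 * X) + (3 * b + r) -> b < X -> r < 3 ->
  1 <= i <= N - 1 -> v * i + j = Q * N -> 0 < j <= N ->
  ((r + w3 h b + w3 h a) %% 4 == 0) || ((r + w3 h b + w3 h a) %% 4 == 1) ->
  exists2 i, T 0 1 (h.+1 + h) i & (v * i) %% N = N - j.
Proof.
move=> *; have [] := @finish h X N v j i a b r Q => //.
by move=> HT HM; exists i.
Qed.

Lemma w3_1 h : 1 <= h -> w3 h 1 = 1.
Proof. by case: h => // h _; rewrite w3S w3_zero. Qed.
Lemma w3_2 h : 1 <= h -> w3 h 2 = 2.
Proof. by case: h => // h _; rewrite w3S w3_zero. Qed.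
Lemma w3_3 h : 2 <= h -> w3 h 3 = 1.
Proof. by case: h => [|[|h]] // _; rewrite !w3S w3_zero. Qed.
Lemma w3_4 h : 2 <= h -> w3 h 4 = 2.
Proof. by case: h => [|[|h]] // _; rewrite !w3S w3_zero. Qed.

Theorem lemma5 (m n v delta : nat) :
  m %% 4 = 1 -> 1 < m ->
  n = 3 ^ m - 1 ->
  v = (3 ^ ((m - 1) %/ 2) + 1) %/ 2 ->
  delta = (3 ^ ((m - 1) %/ 2) + 13) %/ 2 ->
  coprime v n /\
  (forall k, n - (delta - 1) <= k <= n - 1 ->
     exists2 i, T 0 1 m i & (v * i) %% n = k).
Proof.
move=> Hm4 Hm1 Hn Hv Hd.
set s := m %/ 4.
have s1 : 1 <= s by lia.
set h := 2 * s.
have Hm : m = h.+1 + h by lia.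
have Hh : (m - 1) %/ 2 = h by lia.
rewrite Hh in Hv Hd.
have HX4 : 3 ^ h %% 4 = 1.
  by rewrite /h expnM -modnXm (_ : 3 ^ 2 %% 4 = 1) // exp1n.
have HX9 : 9 <= 3 ^ h.
  rewrite /h expnM (_ : 3 ^ 2 = 9) //.
  by rewrite -{1}(expn1 9) leq_pexp2l.
have H3 : 3 ^ h.+1 = 3 * 3 ^ h by rewrite expnS.
have H3m : 3 ^ (h.+1 + h) = 3 * 3 ^ h * 3 ^ h by rewrite expnD H3.
set X := 3 ^ h in HX4 HX9 Hv Hd H3 H3m.
set e := X %/ 4.
have HXe : X = 4 * e + 1 by lia.
have e2 : 2 <= e by lia.
have -> : v = 2 * e + 1 by lia.
have -> : delta = 2 * e + 7 by lia.
have HN : n = 48 * e * e + 24 * e + 2 by rewrite Hn Hm H3m HXe; nia.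
rewrite HN; split.
  rewrite /coprime (_ : 48 * e * e + 24 * e + 2 = (24 * e) * (2 * e + 1) + 2); last by nia.
  rewrite gcdnMDl gcdnC (_ : 2 * e + 1 = e * 2 + 1); last by lia.
  by rewrite gcdnMDl.
move=> k Hk.
rewrite Hm.
have HN' : 3 ^ (h.+1 + h) - 1 = 48 * e * e + 24 * e + 2 by rewrite -HN Hn Hm.
set N := 48 * e * e + 24 * e + 2 in Hk HN' *.
have [j [Hj1 Hj2 ->]] : exists j, [/\ 1 <= j, j <= 2 * e + 6 & k = N - j].
  by exists (N - k); split; lia.
have Hhs : h = 2 * s by [].
have HXX : X = 4 * e + 1 := HXe.
have [Hev|Hod] : j = 2 * (j %/ 2) \/ j = 2 * (j %/ 2) + 1 by lia.
  set kk := j %/ 2 in Hev.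
  case: (boolP ((e == 2) && (kk == 5))) => Hs.
    move/andP: Hs => [/eqP He /eqP Hk5].
    have Hh2 : h = 2.
      case: (leqP 3 h) => Hh3; last by lia.
      have : 3 ^ 3 <= 3 ^ h by rewrite leq_pexp2l.
      rewrite -/X HXX He; lia.
    rewrite /N Hev Hk5 He Hh2.
    exists 240; last by [].
    by rewrite /T !w3S w30.
  have [k1 Hk1] : exists k1, kk = k1.+1 by exists kk.-1; lia.
  have [b Hb] : exists b, 4 * e + 1 = 2 * kk + b by exists (4 * e + 1 - 2 * kk); lia.
  have HC := @w3C h (2 * k1 + 1) b.
  have Hi : (2 * k1 + 1) * (3 * X) + (3 * b + 0) = 24 * kk * e.
    have := congr1 (muln 3) Hb; rewrite HXX Hk1; lia.
  have Hkk : kk <= e + 3 by lia.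
  apply: (@finish' h X N _ j _ (2 * k1 + 1) b 0 kk) => //.
  - lia.
  - rewrite Hi; apply/andP; split; first by lia.
    have := leq_mul Hkk (leqnn e); have := leq_mul e2 (leqnn e); lia.
  - rewrite Hi Hev; nia.
  - lia.
  - rewrite add0n addnC HC; last by lia. lia.
set kk := j %/ 2 in Hod.
have H1h : 1 <= h by lia.
have H2h : 2 <= h by lia.
have [Hlt|Hge] := ltnP kk e.
  have [b Hb] : exists b, b + 2 * kk + 1 = 2 * e by exists (2 * e - 1 - 2 * kk); lia.
  have HC := @w3C h (2 * kk + 2 * e + 1) b.
  apply: (@finish' h X N _ j _ (2 * kk + 2 * e + 1) b 1 (kk + e + 1)) => //.
  - lia.
  - apply/andP; split; first by lia.
    have : 2 * kk + 2 * e + 1 <= 4 * e - 1 by lia.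
    move/leq_mul => /(_ _ _ (leqnn (3 * X))); rewrite HXX; nia.
  - have := congr1 (muln (3 * (2 * e + 1))) Hb; rewrite Hod HXX; lia.
  - lia.
  - rewrite -addnA (addnC (w3 h b)) HC; last by lia. lia.
have [Heq|Hgt] := eqVneq kk e.
  have HC := @w3C h (4 * e) 0.
  apply: (@finish' h X N _ j _ (4 * e) (4 * e) 1 (2 * e + 1)) => //.
  - lia.
  - rewrite HXX; apply/andP; split; nia.
  - rewrite Hod Heq HXX; nia.
  - lia.
  - have HC' : w3 h (4 * e) = 2 * h.
      by rewrite -(addn0 (w3 h (4 * e))) -{2}(w3_zero h); apply: HC; lia.
    rewrite HC'; lia.
have [Heq1|Hgt1] := eqVneq kk (e + 1).
  have [b Hb] : exists b, b + 2 = 4 * e by exists (4 * e - 2); lia.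
  have HC := @w3C h 2 b.
  apply: (@finish' h X N _ j _ 1 b 2 1) => //.
  - lia.
  - apply/andP; split; rewrite HXX; lia.
  - have := congr1 (muln (3 * (2 * e + 1))) Hb; rewrite Hod Heq1 HXX; lia.
  - lia.
  - move: HC; rewrite w3_1 // w3_2 // => HC.
    have -> : 2 + w3 h b + 1 = 2 * h + 1 by lia.
    lia.
have Heq2 : kk = e + 2 by lia.
have [b Hb] : exists b, b + 4 = 4 * e by exists (4 * e - 4); lia.
have HC := @w3C h 4 b.
apply: (@finish' h X N _ j _ 3 b 2 2) => //.
- lia.
- have := leq_mul e2 (leqnn e); move=> He; apply/andP; split; rewrite HXX; lia.
- have := congr1 (muln (3 * (2 * e + 1))) Hb; rewrite Hod Heq2 HXX; lia.
- lia.
- move: HC; rewrite w3_3 // w3_4 // => HC.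
  have -> : 2 + w3 h b + 1 = 2 * h + 1 by lia.
  lia.
Qed.
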